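(* For every $n\ge0$, $$|\mathcal{B}_{n+1}(213)|=\sum_{j=0}^{n}|\mathcal{G}(n;0,j)|.$$
   Context: A ballot permutation is a $\pi\in\mathfrak{S}_m$ such that every prefix $\pi_1\cdots\pi_i$ has at most as many descents ($\pi_j>\pi_{j+1}$) as ascents ($\pi_j<\pi_{j+1}$); $\mathcal{B}_m$ denotes the set of them, and $\mathcal{B}_m(213)$ the subset of those having no subsequence order-isomorphic to $213$. A Gessel walk is a lattice path confined to $\mathbb{N}^2$ with steps from $\{(0,1),(0,-1),(1,1),(-1,-1)\}$. $\mathcal{G}(n;i,j)$ is the set of $n$-step Gessel walks starting at $(0,i)$ and ending at $(0,j)$. *)

(* Defs.v *)
From mathcomp Require Import all_boot all_order all_algebra all_fingroup.
Set Implicit Arguments. Unset Strict Implicit. Unset Printing Implicit Defensive.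
Import GRing.Theory Num.Theory.

(* One-line notation (0-based): k-th value of pi, as a nat in 0..m-1. *)
Definition pval (m : nat) (pi : 'S_m) (k : nat) : nat :=
  match m as m0 return 'S_m0 -> nat with
  | 0 => fun _ => 0
  | m'.+1 => fun p => nat_of_ord (p (inord k : 'I_m'.+1))
  end pi.

(* number of descents / ascents inside the prefix pi_1 ... pi_i
   (1-based positions j with j < i, i.e. 0-based j < i-1) *)
Definition pref_des (m : nat) (pi : 'S_m) (i : nat) : nat :=
  \sum_(j < i.-1) (pval pi j.+1 < pval pi j).
Definition pref_asc (m : nat) (pi : 'S_m) (i : nat) : nat :=
  \sum_(j < i.-1) (pval pi j < pval pi j.+1).

Definition ballot (m : nat) (pi : 'S_m) : bool :=
  [forall i : 'I_m.+1, pref_des pi i <= pref_asc pi i].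

Definition contains213 (m : nat) (pi : 'S_m) : bool :=
  [exists a : 'I_m, exists b : 'I_m, exists c : 'I_m,
     [&& a < b, b < c, pi b < pi a & pi a < pi c]].

Definition ballot213 (m : nat) : {set 'S_m} :=
  [set pi : 'S_m | ballot pi && ~~ contains213 pi].

Local Open Scope ring_scope.
(* Steps encoded by 'I_4 :
   0 -> (0,1), 1 -> (0,-1), 2 -> (1,1), 3 -> (-1,-1). *)
Definition stepx (s : 'I_4) : int :=
  match nat_of_ord s with 2 => 1 | 3 => -1 | _ => 0 end.
Definition stepy (s : 'I_4) : int :=
  match nat_of_ord s with 0 => 1 | 1 => -1 | 2 => 1 | _ => -1 end.

Definition posx (w : seq 'I_4) (k : nat) : int :=
  \sum_(s <- take k w) stepx s.
Definition posy (i : nat) (w : seq 'I_4) (k : nat) : int :=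
  i%:Z + \sum_(s <- take k w) stepy s.

Definition gessel_walk (n i j : nat) (w : n.-tuple 'I_4) : bool :=
  [forall k : 'I_n.+1, (0 <= posx w k) && (0 <= posy i w k)]
  && (posx w n == 0) && (posy i w n == j%:Z).

Definition gessel (n i j : nat) : {set n.-tuple 'I_4} :=
  [set w : n.-tuple 'I_4 | gessel_walk i j w].

(* Main.v *)
Require Import Defs.
From mathcomp Require Import all_boot all_order all_algebra all_fingroup.
From mathcomp Require Import zify.
Set Implicit Arguments. Unset Strict Implicit. Unset Printing Implicit Defensive.

Definition Tg (g : nat -> nat -> nat) t d :=
  (g t.+1 d.+1 + (if d is d'.+1 then \sum_(v < t.+1) g v d' else 0))%N.
Definition Pc n := iter n Tg (fun _ _ => 1%N).
Fixpoint Wc n x y : nat :=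
  match n with
  | 0 => (x == 0)%N : nat
  | n'.+1 => (Wc n' x y.+1 + Wc n' x.+1 y.+1 +
      (if y is y'.+1 then Wc n' x y' + (if x is x'.+1 then Wc n' x' y' else 0) else 0))%N
  end.

Lemma pascal_sum (f : nat -> nat) t :
  (\sum_(x < t.+2) 'C(t.+1, x) * f x = \sum_(x < t.+1) 'C(t, x) * (f x + f x.+1))%N.
Proof.
rewrite big_ord_recl /= bin0 mul1n.
under eq_bigr => i _ do rewrite /bump /= add1n binS mulnDl.
rewrite big_split /=.
under [in RHS]eq_bigr => i _ do rewrite mulnDr.
rewrite big_split /= addnA; congr (_ + _).
rewrite [in RHS]big_ord_recl /= bin0 mul1n big_ord_recr /= bin_small // mul0n addn0.
by congr (_ + _); apply: eq_bigr => i _; rewrite /bump /= add1n.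
Qed.

Lemma pascal_sum2 (f : nat -> nat) t :
  (\sum_(x < t.+1) 'C(t, x) * (f x + (if nat_of_ord x is x'.+1 then f x' else 0))
   = \sum_(x < t.+1) 'C(t.+1, x.+1) * f x)%N.
Proof.
under eq_bigr => i _ do rewrite mulnDr.
rewrite big_split /= [X in _ + X = _]big_ord_recl /= muln0 add0n.
under [in RHS]eq_bigr => i _ do rewrite binS mulnDl.
rewrite big_split /= addnC; congr (_ + _).
rewrite [in RHS]big_ord_recr /= bin_small // mul0n addn0.
by apply: eq_bigr => i _; rewrite /bump /= add1n.
Qed.

Lemma hockey (f : nat -> nat) t :
  (\sum_(v < t.+1) \sum_(x < v.+1) 'C(v, x) * f x
   = \sum_(x < t.+1) 'C(t.+1, x.+1) * f x)%N.
Proof.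
elim: t => [|t IH].
  by rewrite !big_ord_recl !big_ord0 /= !addn0.
rewrite big_ord_recr /= IH.
rewrite [in RHS]big_ord_recr /= binn.
under [in RHS]eq_bigr => i _ do rewrite binS mulnDl.
rewrite big_split /=.
by rewrite [in X in _ + X = _]big_ord_recr /= binn addnA.
Qed.

Lemma PW n t d : Pc n t d = (\sum_(x < t.+1) 'C(t, x) * Wc n x d)%N.
Proof.
elim: n t d => [|n IH] t d.
  rewrite /= big_ord_recl /= bin0 big1 // => i _.
  by rewrite /bump /= add1n muln0.
rewrite /Pc iterS -/(Pc n) /Tg IH /=.
under [in RHS]eq_bigr => i _ do rewrite mulnDr.
rewrite big_split /= (pascal_sum (fun x => Wc n x d.+1)); congr (_ + _).
case: d => [|d]; first by rewrite big1 // => i _; rewrite muln0.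
under eq_bigr => v _ do rewrite IH.
by rewrite (hockey (fun x => Wc n x d)) (pascal_sum2 (fun x => Wc n x d)).
Qed.

Notation pv := Defs.pval.

Lemma sum_perm_lift m (F : 'S_m.+1 -> nat) :
  (\sum_(p : 'S_m.+1) F p = \sum_(s : 'S_m) \sum_(v : 'I_m.+1) F (lift_perm ord_max v s))%N.
Proof.
rewrite (partition_big (fun p : 'S_m.+1 => p ord_max) predT) //=.
rewrite exchange_big /=; apply: eq_bigr => j0 _.
set i0 := (ord_max : 'I_m.+1).
rewrite (reindex (lift_perm i0 j0)); last first.
  pose ulsf i (s : 'S_m.+1) k := odflt k (unlift (s i) (s (lift i k))).
  have ulsfK i (s : 'S_m.+1) k: lift (s i) (ulsf i s k) = s (lift i k).
    rewrite /ulsf; have:= neq_lift i k.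
    by rewrite -(can_eq (permK s)) => /unlift_some[] ? ? ->.
  have inj_ulsf: injective (ulsf i0 _).
    move=> s; apply: can_inj (ulsf (s i0) s^-1%g) _ => k'.
    by rewrite {1}/ulsf ulsfK !permK liftK.
  exists (fun s => perm (inj_ulsf s)) => [s _ | s].
    by apply/permP=> k'; rewrite permE /ulsf lift_perm_lift lift_perm_id liftK.
  move/(s _ =P _) => si0; apply/permP=> k.
  case: (unliftP i0 k) => [k'|] ->; rewrite ?lift_perm_id //.
  by rewrite lift_perm_lift -si0 permE ulsfK.
by apply: eq_bigl => s; rewrite lift_perm_id eqxx.
Qed.

Lemma pvalE m (s : 'S_m) (a : 'I_m) : pv s a = s a.
Proof. case: m s a => [|m] s a; [by case: a | ]. by rewrite /Defs.pval inord_val. Qed.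

Lemma pval_lift k (s : 'S_k.+1) (v : 'I_k.+2) j : (j < k.+1)%N ->
  pv (lift_perm ord_max v s) j = bump v (pv s j).
Proof.
move=> hj; rewrite /Defs.pval.
have -> : (inord j : 'I_k.+2) = lift ord_max (inord j : 'I_k.+1).
  apply: val_inj; rewrite /= /bump !inordK //; last exact: ltnW. by rewrite ltnNge -ltnS hj.
by rewrite /= lift_perm_lift.
Qed.

Lemma pval_last k (s : 'S_k.+1) (v : 'I_k.+2) :
  pv (lift_perm ord_max v s) k.+1 = v.
Proof.
rewrite /Defs.pval.
have -> : (inord k.+1 : 'I_k.+2) = ord_max by apply: val_inj; rewrite /= inordK.
by rewrite /= lift_perm_id.
Qed.

Lemma bump_lt2 v x y : (bump v x < bump v y) = (x < y).
Proof. by rewrite !ltnNge leq_bump2. Qed.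
Lemma bump_ltv v x : (bump v x < v) = (x < v).
Proof. rewrite /bump; case: (leqP v x) => h /=; lia. Qed.
Lemma v_lt_bump v x : (v < bump v x) = (v <= x).
Proof. rewrite /bump; case: (leqP v x) => h /=; lia. Qed.

Lemma pv_lt m (s : 'S_m) a : (a < m)%N -> (pv s a < m)%N.
Proof. move=> ha; rewrite -[a]/(nat_of_ord (Ordinal ha)) pvalE; exact: ltn_ord. Qed.

Lemma pv_inj m (s : 'S_m) a b : (a < m)%N -> (b < m)%N -> pv s a = pv s b -> a = b.
Proof.
move=> ha hb; rewrite -[a]/(nat_of_ord (Ordinal ha)) -[b]/(nat_of_ord (Ordinal hb)) !pvalE.
by move=> /val_inj /perm_inj [].
Qed.

Lemma pv_surj m (s : 'S_m) u : (u < m)%N -> exists2 a, (a < m)%N & pv s a = u.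
Proof.
move=> hu; exists (s^-1%g (Ordinal hu)); first exact: ltn_ord.
by rewrite pvalE permKV.
Qed.

Lemma c213P m (s : 'S_m) : contains213 s <->
  exists a b c, [/\ (a < b)%N, (b < c)%N, (c < m)%N & (pv s b < pv s a < pv s c)%N].
Proof.
split.
  move=> /existsP[a /existsP[b /existsP[c /and4P[h1 h2 h3 h4]]]].
  by exists a, b, c; rewrite !pvalE h3 h4 (ltn_ord c); split.
move=> [a [b [c [h1 h2 h3 /andP[h4 h5]]]]].
have hb : (b < m)%N by apply: ltn_trans h3.
have ha : (a < m)%N by apply: ltn_trans hb.
apply/existsP; exists (Ordinal ha); apply/existsP; exists (Ordinal hb).
apply/existsP; exists (Ordinal h3); rewrite /= h1 h2 /= -!pvalE /= h4 h5 //.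
Qed.

Section Lift.
Variables (k : nat) (s : 'S_k.+1) (v : 'I_k.+2).
Local Notation p := (lift_perm ord_max v s).

Lemma asc_pre i : (i <= k.+1)%N -> pref_asc p i = pref_asc s i.
Proof.
move=> hi; rewrite /pref_asc; apply: eq_bigr => j _.
have hj := ltn_ord j.
by rewrite !pval_lift ?bump_lt2 //; lia.
Qed.

Lemma des_pre i : (i <= k.+1)%N -> pref_des p i = pref_des s i.
Proof.
move=> hi; rewrite /pref_des; apply: eq_bigr => j _.
have hj := ltn_ord j.
by rewrite !pval_lift ?bump_lt2 //; lia.
Qed.

Lemma asc_tot : pref_asc p k.+2 = (pref_asc s k.+1 + (pv s k < v))%N.
Proof.
rewrite -(asc_pre (leqnn _)) /pref_asc big_ord_recr; congr (_ + _).
by rewrite pval_last pval_lift // bump_ltv.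
Qed.

Lemma des_tot : pref_des p k.+2 = (pref_des s k.+1 + (v <= pv s k))%N.
Proof.
rewrite -(des_pre (leqnn _)) /pref_des big_ord_recr; congr (_ + _).
by rewrite pval_last pval_lift // v_lt_bump.
Qed.

Lemma ballot_lift : ballot p = ballot s && (pref_des p k.+2 <= pref_asc p k.+2)%N.
Proof.
apply/forallP/andP.
  move=> H; split; last exact: (H ord_max).
  apply/forallP => i; have := H (widen_ord (leqnSn _) i).
  by rewrite /= asc_pre ?des_pre // -ltnS ltn_ord.
move=> [/forallP H1 H2] i.
have := ltn_ord i; rewrite ltnS leq_eqVlt => /orP[/eqP -> // | hi].
have := H1 (Ordinal hi); rewrite /= asc_pre ?des_pre // -ltnS //.
Qed.

Lemma c213_lift : contains213 p <-> contains213 s \/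
  exists a b, [/\ (a < b)%N, (b < k.+1)%N & (pv s b < pv s a < v)%N].
Proof.
rewrite !c213P; split.
  move=> [a [b [c [h1 h2 h3 h4]]]].
  have hb : (b < k.+1)%N by lia.
  have ha : (a < k.+1)%N by lia.
  case: (ltnP c k.+1) => hc.
    move: h4; rewrite !(pval_lift _ _ ha) !(pval_lift _ _ hb) (pval_lift _ _ hc) !bump_lt2 => h4.
    by left; exists a, b, c; split.
  have ec : c = k.+1 by lia.
  move: h4; rewrite ec pval_last !(pval_lift _ _ ha) !(pval_lift _ _ hb) bump_lt2 bump_ltv => h4.
  by right; exists a, b; split.
move=> [[a [b [c [h1 h2 h3 h4]]]] | [a [b [h1 h2 h4]]]].
  exists a, b, c; split => //; first lia.
  by rewrite !pval_lift ?bump_lt2 //; lia.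
exists a, b, k.+1; split => //.
by rewrite pval_last !pval_lift ?bump_lt2 ?bump_ltv //; lia.
Qed.

Lemma avoid_ext : ~ contains213 s ->
  (exists a b, [/\ (a < b)%N, (b < k.+1)%N & (pv s b < pv s a < v)%N]) <-> ((pv s k).+1 < v)%N.
Proof.
move=> hav; split.
  move=> [a [b [h1 h2 /andP[h3 h4]]]].
  rewrite ltnNge; apply/negP => hv.
  have hak : pv s a != pv s k.
    apply/eqP => /pv_inj e; have := e (ltn_trans h1 h2) (ltnSn k); lia.
  have hlt : (pv s a < pv s k)%N by lia.
  have hbk : (b < k)%N.
    rewrite ltn_neqAle -ltnS h2 andbT; apply/eqP => e; move: h3; rewrite e; lia.
  apply: hav; apply/c213P; exists a, b, k; split => //; lia.
move=> hv.
have hu : ((pv s k).+1 < k.+1)%N by have := ltn_ord v; lia.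
have [a ha hfa] := pv_surj s hu.
have hak : a != k by apply/eqP => e; move: hfa; rewrite e; lia.
exists a, k; split => //; [lia | lia].
Qed.
End Lift.

Lemma sumF (g : nat -> nat -> nat) k l A D : (l <= k)%N -> (D <= A)%N ->
  (\sum_(v < k.+2) ((v <= l.+1) && (D + (v <= l) <= A + (l < v))) *
     g v (A + (l < v) - (D + (v <= l))))%N = Tg g l (A - D).
Proof.
move=> hl hDA.
rewrite -(big_mkord xpredT (fun v => ((v <= l.+1) && (D + (v <= l) <= A + (l < v))) *
     g v (A + (l < v) - (D + (v <= l)))))%N.
rewrite (big_cat_nat _ (n := l.+2)) //=. 
rewrite [X in (_ + X)%N]big1_seq ?addn0; last first.
  by move=> v /andP[_]; rewrite mem_index_iota => /andP[h _]; rewrite leqNgt h.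
rewrite big_nat_recr //= ltnSn ltnn /= addn0 addn1.
have -> : (D <= A.+1)%N = true by lia.
rewrite mul1n.
have -> : (A.+1 - D = (A - D).+1)%N by lia.
rewrite /Tg addnC; congr (_ + _)%N.
case E: (A - D)%N => [|d].
  rewrite big1_seq // => v /andP[_]; rewrite mem_index_iota => /andP[_ hv].
  rewrite ltnS in hv; rewrite hv leqW //= ltnNge hv addn0 addn1.
  by have -> : (D.+1 <= A)%N = false by lia.
rewrite -(big_mkord xpredT (fun v => g v d)).
apply: eq_big_seq => v; rewrite mem_index_iota => /andP[_ hv].
rewrite ltnS in hv; rewrite hv leqW //= ltnNge hv addn0 addn1.
have -> : (D.+1 <= A)%N = true by lia.
by rewrite mul1n; congr g; lia.
Qed.

Definition good m (s : 'S_m) : bool := ballot s && ~~ contains213 s.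
Definition stat m (s : 'S_m) : nat := (pref_asc s m - pref_des s m)%N.

Lemma step k (g : nat -> nat -> nat) :
  (\sum_(p : 'S_k.+2) good p * g (pv p k.+1) (stat p) =
   \sum_(s : 'S_k.+1) good s * Tg g (pv s k) (stat s))%N.
Proof.
rewrite sum_perm_lift; apply: eq_bigr => s _.
case Hg: (good s); last first.
  rewrite mul0n big1 // => v _.
  suff -> : good (lift_perm ord_max v s) = false by [].
  apply/negP => /andP[hb hc]; move/negP: Hg; apply; apply/andP; split.
    by move: hb; rewrite ballot_lift => /andP[].
  apply/negP => hc'; move/negP: hc; apply; apply/c213_lift; left; exact/negP/negP.
move: Hg => /andP[hb hc]; rewrite mul1n.
have hav : ~ contains213 s by apply/negP.
have hDA : (pref_des s k.+1 <= pref_asc s k.+1)%N by have := forallP hb ord_max.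
have hl : (pv s k <= k)%N by rewrite -ltnS pv_lt.
rewrite /stat -(sumF g hl hDA); apply: eq_bigr => v _.
rewrite pval_last asc_tot des_tot; congr (_ * _)%N.
rewrite /good ballot_lift hb asc_tot des_tot /=.
have -> : contains213 (lift_perm ord_max v s) = ((pv s k).+1 < v)%N.
  apply/idP/idP.
    move/c213_lift => [hc' | h]; first by rewrite hc' in hc.
    by apply/(avoid_ext v hav).
  move=> h; apply/c213_lift; right; exact/(avoid_ext v hav).
by rewrite -leqNgt andbC.
Qed.

Lemma good_sum k (g : nat -> nat -> nat) :
  (\sum_(s : 'S_k.+1) good s * g (pv s k) (stat s))%N = iter k Tg g 0 0.
Proof.
elim: k g => [|k IH] g.
  rewrite (eq_bigr (fun _ => g 0 0)).
    by rewrite sum_nat_const card_Sn [1`!]/= mul1n.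
  move=> s _.
  have hg : good s.
    apply/andP; split.
      apply/forallP => i; rewrite /pref_des /pref_asc.
      have -> : (nat_of_ord i).-1 = 0 by case: i => [[|[|i]] hi].
      by rewrite !big_ord0.
    by apply/negP => /c213P [a [b [c [h1 h2 h3 _]]]]; lia.
  rewrite hg mul1n /stat /pref_asc /pref_des /= !big_ord0.
  by case: (s (inord 0)) => [[|?] ?].
by rewrite step IH iterSr.
Qed.

Section Walks.
Import GRing.Theory Num.Theory.


Lemma sum_tupleS (T : finType) n (F : n.+1.-tuple T -> nat) :
  (\sum_(t : n.+1.-tuple T) F t = \sum_(s : T) \sum_(w : n.-tuple T) F [tuple of s :: w])%N.
Proof.
rewrite pair_big /=.
rewrite (reindex (fun p : T * n.-tuple T => [tuple of p.1 :: p.2])) //=.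
exists (fun t : n.+1.-tuple T => (thead t, [tuple of behead t])).
  by move=> [s w] _ /=; congr (_, _); apply: val_inj.
by move=> t _; rewrite [RHS]tuple_eta; apply: val_inj.
Qed.

Lemma sum_tuple0 (T : finType) (F : 0.-tuple T -> nat) :
  (\sum_(t : 0.-tuple T) F t = F [tuple])%N.
Proof.
rewrite (eq_bigr (fun _ => F [tuple])); last by move=> t _; rewrite tuple0.
by rewrite sum_nat_const card_tuple expn0 mul1n.
Qed.

Local Open Scope ring_scope.

Fixpoint okw (x y : int) (w : seq 'I_4) : bool :=
  match w with
  | [::] => x == 0
  | s :: w' => [&& 0 <= x + stepx s, 0 <= y + stepy s & okw (x + stepx s) (y + stepy s) w']
  end.

Lemma zS (m : nat) : m%:Z + 1 = m.+1%:Z.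
Proof. by rewrite -PoszD addn1. Qed.
Lemma zP (m : nat) : m.+1%:Z + -1 = m%:Z.
Proof. by rewrite -zS addrK. Qed.

Lemma cnt_okw n (x y : nat) :
  (\sum_(w : n.-tuple 'I_4) okw x%:Z y%:Z w)%N = Wc n x y.
Proof.
elim: n x y => [|n IH] x y.
  by rewrite sum_tuple0 /=.
rewrite sum_tupleS /= !big_ord_recl big_ord0 addn0 /=.
have -> : stepx (ord0 : 'I_4) = 0 by [].
have -> : stepy (ord0 : 'I_4) = 1 by [].
have -> : stepx (lift ord0 ord0 : 'I_4) = 0 by [].
have -> : stepy (lift ord0 ord0 : 'I_4) = -1 by [].
have -> : stepx (lift ord0 (lift ord0 ord0) : 'I_4) = 1 by [].
have -> : stepy (lift ord0 (lift ord0 ord0) : 'I_4) = 1 by [].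
have -> : stepx (lift ord0 (lift ord0 (lift ord0 ord0)) : 'I_4) = -1 by [].
have -> : stepy (lift ord0 (lift ord0 (lift ord0 ord0)) : 'I_4) = -1 by [].
rewrite !addr0 !zS !IH [X in (_ + X)%N = _]addnCA addnA; congr (_ + _)%N.
case: y => [|y].
  rewrite !big1 //= => w _; rewrite andbF //.
rewrite !zP.
case: x => [|x]; first by rewrite IH [X in (_ + X)%N]big1 // addn0.
by rewrite !zP !IH.
Qed.

Lemma okw_prefix (w : seq 'I_4) (x y : int) : 0 <= x -> 0 <= y ->
  ((forall k, (k <= size w)%N ->
      (0 <= x + \sum_(s <- take k w) stepx s) && (0 <= y + \sum_(s <- take k w) stepy s))
   /\ x + \sum_(s <- w) stepx s = 0) <-> okw x y w.
Proof.
elim: w x y => [|s w IH] x y hx hy /=.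
  rewrite big_nil addr0; split; first by move=> [_ ->].
  move/eqP=> ->; split => // k _; rewrite !big_nil !addr0 hy andbT //.
split.
  move=> [H He].
  have := H 1%N isT; rewrite /= take0 !big_cons !big_nil !addr0 => /andP[h1 h2].
  rewrite h1 h2 /=; apply/(IH _ _ h1 h2); split.
    move=> k hk; have := H k.+1 hk; rewrite /= !big_cons !addrA //.
  by move: He; rewrite big_cons addrA.
move=> /and3P[h1 h2 /(IH _ _ h1 h2)] [H He]; split; last by rewrite big_cons addrA.
case=> [|k] hk; first by rewrite take0 !big_nil !addr0 hx hy.
by rewrite /= !big_cons !addrA; apply: H.
Qed.

Lemma gessel_okw n j (w : n.-tuple 'I_4) :
  gessel_walk 0 j w = okw 0 0 w && (\sum_(s <- w) stepy s == j%:Z).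
Proof.
rewrite /gessel_walk /posx /posy add0r.
have Hn : take n w = w by rewrite take_oversize // size_tuple.
rewrite Hn.
have Hequiv := @okw_prefix w 0 0 isT isT.
apply/idP/idP.
  move=> /andP[/andP[/forallP Hk /eqP Hx] ->]; rewrite andbT.
  apply/Hequiv; split; last by rewrite add0r.
  move=> k; rewrite size_tuple => hk.
  by have := Hk (Ordinal (hk : (k < n.+1)%N)); rewrite /= !add0r.
move=> /andP[/Hequiv [Hk Hx] ->]; rewrite andbT.
rewrite add0r in Hx; rewrite Hx eqxx andbT.
apply/forallP => k; have := Hk k; rewrite size_tuple !add0r; apply.
by rewrite -ltnS.
Qed.

Lemma okw_y x y w : okw x y w -> 0 <= y -> 0 <= y + \sum_(s <- w) stepy s.
Proof.
elim: w x y => [|s w IH] x y /=; first by rewrite big_nil addr0.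
move=> /and3P[_ h2 /IH h] _; rewrite big_cons addrA; exact: h.
Qed.

Lemma stepy_le1 s : stepy s <= 1.
Proof. case: s => [[|[|[|[|m]]]] hm] //. Qed.

Lemma Sy_le (w : seq 'I_4) : \sum_(s <- w) stepy s <= (size w)%:Z.
Proof.
elim: w => [|s w IH]; first by rewrite big_nil.
rewrite big_cons /= -zS addrC; exact: (lerD IH (stepy_le1 s)).
Qed.

Lemma card_setP (T : finType) (P : pred T) : #|[set x | P x]| = (\sum_x P x)%N.
Proof.
rewrite cardsE -sum1_card big_mkcond /=; apply: eq_bigr => x _.
by rewrite unfold_in; case: (P x).
Qed.

Lemma walk_total n : (\sum_(j < n.+1) #|gessel n 0 j|)%N = Wc n 0 0.
Proof.
rewrite -cnt_okw.
under eq_bigr => j _ do rewrite /gessel card_setP.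
rewrite exchange_big /=; apply: eq_bigr => w _.
under eq_bigr => j _ do rewrite gessel_okw.
case Hw: (okw 0 0 w); last by rewrite big1.
have h0 := okw_y Hw isT; rewrite add0r in h0.
have h1 := Sy_le w; rewrite size_tuple in h1.
set S := \sum_(s <- w) stepy s in h0 h1 *.
have [m Hm] : exists m : nat, S = m%:Z by exists `|S|%N; rewrite gez0_abs.
rewrite Hm lez_nat in h1.
rewrite (bigD1 (Ordinal (h1 : (m < n.+1)%N))) //= Hm eqxx big1 // => j hj.
rewrite eqz_nat (_ : (m == j) = false) //; apply: contraNF hj => /eqP e; apply/eqP/val_inj; by rewrite /= e.
Qed.

End Walks.

Theorem theorem1p4 (n : nat) :
  #|ballot213 n.+1| = (\sum_(j < n.+1) #|gessel n 0 j|)%N.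
Proof.
rewrite walk_total /ballot213 card_setP.
have := good_sum n (fun _ _ => 1%N).
rewrite -/(Pc n) PW big_ord1 bin0 mul1n => <-.
by apply: eq_bigr => s _; rewrite muln1.
Qed.
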